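(* Let $P\ll Q$ be probability distributions on an arbitrary measurable space $\mathcal{X}$ and let $\delta:=\frac12|P-Q|$ (so $|P-Q|$ is the total variation norm, $\delta\in[0,1]$). Then for all $\lambda>0$, $$\bar F_\lambda(P\|Q)\le\begin{cases}\frac{\lambda\delta}{\lambda-1}, & \lambda\in[\frac{1}{1-\delta},\infty),\\ 1,&\lambda\in(0,\frac1{1-\delta}),\end{cases}$$ and $$\bar F_\lambda(P\|Q)\ge\begin{cases}0,&\lambda\in(\frac1{1-\delta},\infty),\\ 1-(1-\delta)\lambda,&\lambda\in(1,\frac1{1-\delta}],\\ \delta,&\lambda\in(1-\delta,1],\\ 1-\frac{\lambda\delta}{1-\lambda},&\lambda\in(0,1-\delta].\end{cases}$$ Moreover, both bounds are tight: for each $\delta$ and $\lambda$, the right-hand sides equal the supremum, respectively infimum, of $\bar F_\lambda(P\|Q)$ over all pairs $P\ll Q$ with $\frac12|P-Q|=\delta$.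
   Context: For probability measures $P\ll Q$, $\imath_{P\|Q}(x)=\log\frac{dP}{dQ}(x)$ and $\bar F_\lambda(P\|Q):=\mathbb{P}[\imath_{P\|Q}(X)>\log\lambda]$ with $X\sim P$. $|P-Q|=\int|dP-dQ|$. *)

(* Defs.v *)
From HB Require Import structures.
From mathcomp Require Import all_boot all_order all_algebra.
From mathcomp Require Import all_classical all_reals all_analysis.
Set Implicit Arguments. Unset Strict Implicit. Unset Printing Implicit Defensive.
Import Order.TTheory GRing.Theory Num.Theory.
Local Open Scope classical_set_scope.
Local Open Scope ring_scope.
Local Open Scope ereal_scope.

(* Radon-Nikodym derivative dP/dQ (defined up to Q-a.e. equality, which
   does not affect anything below since P << Q). *)
Definition rn_deriv d (T : measurableType d) (R : realType)
  (P Q : probability T R) : T -> \bar R := charge.Radon_Nikodym (charge_of_finite_measure P) Q.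

Definition info_density d (T : measurableType d) (R : realType)
  (P Q : probability T R) (x : T) : \bar R :=
  match rn_deriv P Q x with
  | r%:E => if (0 < r)%R then (ln r)%:E else -oo
  | +oo => +oo
  | -oo => -oo
  end.

Definition Fbar d (T : measurableType d) (R : realType)
  (P Q : probability T R) (lambda : R) : \bar R :=
  P [set x | (ln lambda)%:E < info_density P Q x].

(* |P - Q| = \int |dP - dQ|, computed w.r.t. the dominating measure Q:
   \int |dP/dQ - 1| dQ. *)
Definition tv_norm d (T : measurableType d) (R : realType)
  (P Q : probability T R) : \bar R :=
  \int[Q]_x `|rn_deriv P Q x - 1|.

Definition Fbar_upper (R : realType) (delta lambda : R) : R :=
  if (1 / (1 - delta) <= lambda)%R then (lambda * delta / (lambda - 1))%R
  else 1%R.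

(* Lower bound of the theorem, as a function of delta and lambda > 0.
   The extra disjunct (lambda == 1) only matters when delta = 0, lambda = 1,
   where the paper's formula 1 - lambda*delta/(1-lambda) is 0/0; there we use
   delta (= 0), the correct value (P = Q gives Fbar_1 = 0). *)
Definition Fbar_lower (R : realType) (delta lambda : R) : R :=
  if (1 / (1 - delta) < lambda)%R then 0%R
  else if (1 < lambda)%R then (1 - (1 - delta) * lambda)%R
  else if ((1 - delta < lambda)%R || (lambda == 1%R)) then delta
  else (1 - lambda * delta / (1 - lambda))%R.

(* Main.v *)
Require Import Defs.
From HB Require Import structures.
From mathcomp Require Import all_boot all_order all_algebra.
From mathcomp Require Import all_classical all_reals all_analysis.
From mathcomp Require Import measurable_realfun.
From mathcomp Require Import ring lra.
Import Order.TTheory GRing.Theory Num.Theory.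
Local Open Scope classical_set_scope.
Local Open Scope ring_scope.
Local Open Scope ereal_scope.


Section S.
Context d (T : measurableType d) (R : realType) (P Q : probability T R).
Hypothesis PQ : P `<< Q.

Let f := rn_deriv P Q.
Definition g x : R := fine (rn_deriv P Q x).

Lemma fE x : rn_deriv P Q x = (g x)%:E.
Proof. by rewrite /g fineK //; apply: Radon_Nikodym_fin_num. Qed.

Lemma rn_int A : measurable A -> P A = \int[Q]_(x in A) (g x)%:E.
Proof.
move=> mA; have := Radon_Nikodym_integral (nu := charge_of_finite_measure P) PQ mA.
by rewrite /= => ->; apply: eq_integral => x _; rewrite -fE.
Qed.

Lemma g_int : Q.-integrable setT (EFin \o g).
Proof.
have := Radon_Nikodym_integrable (nu := charge_of_finite_measure P) (mu := Q) PQ.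
by apply: eq_integrable => // x _; rewrite /= -fE.
Qed.

Lemma mg : measurable_fun setT g.
Proof. by apply/measurable_EFinP; exact: (measurable_int _ g_int). Qed.
End S.
Arguments g {d T R}.
Arguments fE {d T R P Q}.
Arguments rn_int {d T R P Q}.
Arguments g_int {d T R P Q}.
Arguments mg {d T R P Q}.



Section S.
Context d (T : measurableType d) (R : realType) (P Q : probability T R).
Hypothesis PQ : P `<< Q.

Definition pr (M : probability T R) A := fine (M A).
Lemma prE (M : probability T R) A : measurable A -> M A = (pr M A)%:E.
Proof. by move=> mA; rewrite /pr fineK // fin_num_measure. Qed.

Lemma intA l A : measurable A -> \int[Q]_(x in A) (l%:E) = (l * pr Q A)%:E.
Proof. by move=> mA; rewrite (integral_cst _ mA) EFinM /pr fineK // fin_num_measure. Qed.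

Lemma K1 l A : measurable A -> (forall x, A x -> (g P Q x <= l)%R) ->
  (pr P A <= l * pr Q A)%R.
Proof.
move=> mA H; rewrite -lee_fin -(prE P A mA) (rn_int PQ A mA) // -intA //.
apply: le_integral => //.
- exact: (integrableS measurableT) (g_int PQ).
- exact: finite_measure_integrable_cst.
- by move=> x /set_mem /H; rewrite lee_fin.
Qed.

Lemma K2 l A : measurable A -> (forall x, A x -> (l <= g P Q x)%R) ->
  (l * pr Q A <= pr P A)%R.
Proof.
move=> mA H; rewrite -lee_fin -(prE P A mA) (rn_int PQ A mA) // -intA //.
apply: le_integral => //.
- exact: finite_measure_integrable_cst.
- exact: (integrableS measurableT) (g_int PQ).
- by move=> x /set_mem /H; rewrite lee_fin.
Qed.
End S.
Arguments pr {d T R}.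
Arguments prE {d T R}.
Arguments K1 {d T R P Q}.
Arguments K2 {d T R P Q}.


Section S.
Context d (T : measurableType d) (R : realType) (P Q : probability T R).
Hypothesis PQ : P `<< Q.

Lemma mgt l : measurable [set x | (l < g P Q x)%R].
Proof.
have := mg PQ measurableT _ (measurable_itv `]l, +oo[); rewrite setTI.
by congr measurable; apply/seteqP; split => x /=; rewrite in_itv /= andbT.
Qed.

Lemma mle l : measurable [set x | (g P Q x <= l)%R].
Proof.
have := mg PQ measurableT _ (measurable_itv `]-oo, l]); rewrite setTI.
by congr measurable; apply/seteqP; split => x /=; rewrite in_itv /=.
Qed.

Lemma prDI (M : probability T R) {A B : set T} : measurable A -> measurable B ->
  pr M A = (pr M (A `\` B) + pr M (A `&` B))%R.
Proof.
move=> mA mB; rewrite /pr (measureDI M mA mB) fineD // fin_num_measure //.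
  exact: measurableD.
exact: measurableI.
Qed.

Lemma pr_ge0 (M : probability T R) A : (0 <= pr M A)%R.
Proof. by rewrite /pr fine_ge0. Qed.

Lemma prT (M : probability T R) : pr M setT = 1%R.
Proof. by rewrite /pr probability_setT. Qed.

Lemma prC (M : probability T R) A : measurable A -> pr M (~` A) = (1 - pr M A)%R.
Proof.
move=> mA; have := prDI M measurableT mA; rewrite setTD setTI prT => ->.
by rewrite addrK.
Qed.

Lemma pr_le (M : probability T R) A B : measurable A -> measurable B ->
  A `<=` B -> (pr M A <= pr M B)%R.
Proof.
move=> mA mB AB; rewrite (prDI M mB mA) (setIidr AB) lerDr; exact: pr_ge0.
Qed.

Lemma pr_le1 (M : probability T R) A : measurable A -> (pr M A <= 1)%R.
Proof. by move=> mA; rewrite -(prT M); apply: pr_le. Qed.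

End S.
Arguments mgt {d T R P Q}.
Arguments mle {d T R P Q}.
Arguments prDI {d T R} M {A B}.
Arguments prC {d T R} M {A}.
Arguments pr_le {d T R}.
Arguments pr_le1 {d T R} M {A}.
Arguments pr_ge0 {d T R}.
Arguments prT {d T R}.


Section S.
Context d (T : measurableType d) (R : realType) (P Q : probability T R).
Hypothesis PQ : P `<< Q.
Local Notation g := (g P Q).
Local Notation G := [set x | (1 < g x)%R].

Lemma intB A : measurable A ->
  \int[Q]_(x in A) ((g x)%:E - (cst 1%R x)%:E) = (pr P A - pr Q A)%:E.
Proof.
move=> mA; rewrite integralB_EFin //.
- rewrite -(rn_int PQ A mA) /= (intA _ _ _ Q 1%R A mA) (prE P A mA) mul1r -EFinB //.
- by apply: (integrableS measurableT mA) => //; exact: g_int PQ.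
- exact: finite_measure_integrable_cst.
Qed.

Lemma intB' A : measurable A ->
  \int[Q]_(x in A) ((cst 1%R x)%:E - (g x)%:E) = (pr Q A - pr P A)%:E.
Proof.
move=> mA; rewrite integralB_EFin //.
- rewrite -(rn_int PQ A mA) /= (intA _ _ _ Q 1%R A mA) (prE P A mA) mul1r -EFinB //.
- exact: finite_measure_integrable_cst.
- by apply: (integrableS measurableT mA) => //; exact: g_int PQ.
Qed.

Lemma tvG delta : tv_norm P Q = (2 * delta)%:E ->
  (pr P G - pr Q G)%R = delta.
Proof.
move=> htv.
have mG := mgt PQ 1%R.
have e : tv_norm P Q = \int[Q]_(x in G `|` ~` G) (`|g x - 1|)%:E.
  rewrite setUv /tv_norm; apply: eq_integral => x _.
  by rewrite (fE PQ) -EFinB.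
move: htv; rewrite e integral_setU //; try exact: measurableC;
  try (by rewrite /disj_set setICr); first last.
  rewrite setUv; apply/measurable_EFinP; apply: measurableT_comp => //.
  apply: measurable_funB => //; exact: (mg PQ).
rewrite (eq_integral (fun x => (g x)%:E - (cst 1%R x)%:E)); last first.
  move=> x /set_mem /= gx; rewrite ger0_norm ?subr_ge0 ?(ltW gx) //.
rewrite intB // (eq_integral (fun x => (cst 1%R x)%:E - (g x)%:E)); last first.
  move=> x /set_mem /= /negP; rewrite -leNgt => gx.
  by rewrite ler0_norm ?subr_le0 // opprB.
rewrite intB' ?prC //; last exact: measurableC.
rewrite -EFinD => /eqP; rewrite eqe => /eqP H.
have : (2 * (pr P G - pr Q G) = 2 * delta)%R by rewrite -H; ring.
by move/mulfI; apply.
Qed.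

End S.
Arguments intB {d T R P Q} PQ {A}.
Arguments intB' {d T R P Q} PQ {A}.
Arguments tvG {d T R P Q}.


Section S.
Context d (T : measurableType d) (R : realType) (P Q : probability T R).
Hypothesis PQ : P `<< Q.
Local Notation g := (g P Q).
Local Notation G := [set x | (1 < g x)%R].
Variable delta : R.
Hypothesis htv : tv_norm P Q = (2 * delta)%:E.

Let mG : measurable G := mgt PQ 1%R.

Lemma hdelta : (pr P G - pr Q G)%R = delta.
Proof. exact: tvG. Qed.

Lemma F3 A : measurable A -> (pr P A - pr Q A <= delta)%R.
Proof.
move=> mA; rewrite -hdelta.
rewrite (prDI P mA mG) (prDI Q mA mG) (prDI P mG mA) (prDI Q mG mA) !(setIC G).
have h1 : (pr P (A `\` G) <= 1 * pr Q (A `\` G))%R.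
  apply: K1 => //; first exact: measurableD.
  by move=> x [_ /negP]; rewrite -leNgt.
have h2 : (1 * pr Q (G `\` A) <= pr P (G `\` A))%R.
  apply: K2 => //; first exact: measurableD.
  by move=> x [/= /ltW].
lra.
Qed.

Lemma F3' A : measurable A -> (pr Q A - pr P A <= delta)%R.
Proof.
move=> mA; have := F3 _ (measurableC mA); rewrite !prC //; lra.
Qed.

Lemma delta_ge0 : (0 <= delta)%R.
Proof.
rewrite -hdelta subr_ge0 -[X in (X <= _)%R]mul1r; apply: K2 => //.
by move=> x /= /ltW.
Qed.

Lemma null_P A : measurable A -> pr Q A = 0%R -> pr P A = 0%R.
Proof.
move=> mA hq; have : Q A = 0 by rewrite (prE Q A mA) hq.
move/(measure0_null_setP Q mA) => /PQ /(measure0_null_setP P mA).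
by rewrite /pr => ->.
Qed.

Lemma delta_lt1 : (delta < 1)%R.
Proof.
rewrite ltNge; apply/negP => h.
have := pr_le1 P mG; have := pr_ge0 Q G; rewrite -hdelta in h => h1 h2.
have hq : pr Q G = 0%R by lra.
have := null_P _ mG hq; lra.
Qed.

Lemma F5 : delta = 0%R -> pr P G = 0%R.
Proof.
move=> d0; apply: null_P => //.
have h : \int[Q]_(x in G) `|(g x - 1)%:E| = 0.
  rewrite (eq_integral (fun x => (g x)%:E - (cst 1%R x)%:E)); last first.
    move=> x /set_mem /= gx; by rewrite -EFinD ger0_norm // subr_ge0 (ltW gx).
  by rewrite (intB PQ mG) hdelta d0.
move/(ae_eq_integral_abs _ mG) : h.
case.
  apply/measurable_EFinP; apply: measurable_funB => //.
  exact: measurable_funS (mg PQ).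
move=> N [mN QN sub].
have GN : G `<=` N.
  move=> x gx; apply: sub => /= /(_ gx) [] /eqP; rewrite subr_eq0 => /eqP e.
  by move: gx; rewrite /= e ltxx.
apply/eqP; rewrite eq_le pr_ge0 andbT.
by apply: (le_trans (pr_le Q _ _ mG mN GN)); rewrite /pr QN.
Qed.
End S.
Arguments hdelta {d T R P Q}.
Arguments F3 {d T R P Q}.
Arguments F3' {d T R P Q}.
Arguments delta_ge0 {d T R P Q}.
Arguments delta_lt1 {d T R P Q}.
Arguments F5 {d T R P Q}.
Arguments null_P {d T R P Q}.


Section S.
Context d (T : measurableType d) (R : realType) (P Q : probability T R).
Hypothesis PQ : P `<< Q.
Local Notation g := (g P Q).

Lemma FbarE l : (0 < l)%R -> Fbar P Q l = (pr P [set x | (l < g x)%R])%:E.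
Proof.
move=> l0; rewrite -(prE P _ (mgt PQ l)) /Fbar; congr (P _).
apply/seteqP; split => x; rewrite /= /info_density (fE PQ x) /=;
  case: ifPn => g0.
- by rewrite lte_fin ltr_ln // posrE.
- by rewrite ltNge leNye.
- by rewrite lte_fin ltr_ln // posrE.
- move=> lg; exfalso; move: g0; rewrite (lt_trans l0 lg) //.
Qed.

Lemma bounds delta l : tv_norm P Q = (2 * delta)%:E -> (0 < l)%R ->
  (Fbar_lower delta l)%:E <= Fbar P Q l /\ Fbar P Q l <= (Fbar_upper delta l)%:E.
Proof.
move=> htv l0; rewrite FbarE // !lee_fin.
set A := [set x | (l < g x)%R].
set B := [set x | (g x <= l)%R].
set G := [set x | (1 < g x)%R].
have mA : measurable A := mgt PQ l.
have mB : measurable B := mle PQ l.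
have mG : measurable G := mgt PQ 1%R.
have BA : B = ~` A.
  by apply/seteqP; split => x; rewrite /A /B /= leNgt => /negP.
have pAB : pr P A = (1 - pr P B)%R by rewrite BA prC // opprB addrC subrK.
have hd := hdelta PQ _ htv.
have d0 := delta_ge0 PQ _ htv.
have d1 := delta_lt1 PQ _ htv.
have i1 : (1 <= 1 / (1 - delta))%R.
  by rewrite ler_pdivlMr ?subr_gt0 // mul1r lerBlDr lerDl.
split.
- rewrite /Fbar_lower; case: ifPn => h1; first exact: pr_ge0.
  case: ifPn => h2.
    rewrite pAB.
    have e1 : pr P B = (pr P (B `\` G) + pr P (B `&` G))%R := prDI P mB mG.
    have k1 : (pr P (B `&` G) <= l * pr Q (B `&` G))%R.
      apply: K1 => //; first exact: measurableI.
      by move=> x [].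
    have k2 : (pr P (B `\` G) <= pr P (~` G))%R.
      apply: pr_le => //; try exact: measurableD; try exact: measurableC; by move=> x [].
    have k3 : (pr Q (B `&` G) <= pr Q G)%R.
      by apply: pr_le => //; try exact: measurableI; move=> x [].
    have k4 := prC P mG.
    have k5 := pr_ge0 Q (B `&` G).
    have k6 := pr_le1 P mG.
    nra.
  case: ifPn => h3.
    have GA : G `<=` A.
      move=> x; rewrite /G /A /= => gx; apply: le_lt_trans gx.
      by rewrite leNgt.
    have := pr_le P _ _ mG mA GA; have := pr_ge0 Q G; lra.
  move: h3; rewrite negb_or => /andP[h3 h4].
  rewrite -leNgt in h3.
  have l1 : (l < 1)%R by lra.
  rewrite pAB.
  have k1 : (pr P B <= l * pr Q B)%R by apply: K1 => //.
  have k2 := F3' PQ _ htv B mB.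
  have k3 := pr_ge0 Q B.
  suff : (pr P B <= l * delta / (1 - l))%R by lra.
  rewrite ler_pdivlMr ?subr_gt0 //.
  nra.
- rewrite /Fbar_upper; case: ifPn => h1; last exact: pr_le1.
  have l1 : (1 <= l)%R := le_trans i1 h1.
  have [l_eq1|l_gt1] := eqVneq l 1%R.
    have dz : delta = 0%R.
      move: h1; rewrite l_eq1 ler_pdivrMr ?subr_gt0 // mul1r; lra.
    rewrite l_eq1 dz mulr0 mul0r.
    have -> : A = G by rewrite /A l_eq1.
    by rewrite (F5 PQ _ htv dz).
  have l1' : (1 < l)%R by rewrite lt_neqAle eq_sym l_gt1.
  have k1 : (l * pr Q A <= pr P A)%R by apply: K2 => // x /ltW.
  have k2 := F3 PQ _ htv A mA.
  rewrite ler_pdivlMr ?subr_gt0 //.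
  nra.
Qed.
End S.
Arguments FbarE {d T R P Q}.
Arguments bounds {d T R P Q}.


Section W.
Context (R : realType) (p : nat -> R) (hp : forall k, (0 <= p k)%R)
  (hs : (p 0%N + p 1%N + p 2%N = 1)%R).

Definition wm := msum (fun k => mscale (NngNum (hp k)) (@dirac _ nat k R)) 3.

Lemma wmE A : wm A = (\sum_(k < 3) p k * (\1_A k))%:E.
Proof.
rewrite /wm /msum /= sumEFin.
by [].

Qed.

Lemma wm_setT : wm setT = 1.
Proof.
rewrite wmE !big_ord_recl big_ord0 /= !indicE !in_setT !mulr1 addr0.
by rewrite addrA hs.
Qed.

Definition wprob : probability nat R :=
  HB.pack_for (probability nat R) (msum (fun k => mscale (NngNum (hp k)) (@dirac _ nat k R)) 3) (Measure_isProbability.Build _ _ _ (msum (fun k => mscale (NngNum (hp k)) (@dirac _ nat k R)) 3) wm_setT).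

Lemma wprobE A : wprob A = (\sum_(k < 3) p k * (\1_A k))%:E.
Proof. exact: wmE. Qed.
End W.
Arguments wprob {R p}.
Arguments wprobE {R p hp hs}.


Section H.
Context (R : realType) (p q : nat -> R) (hp : forall k, (0 <= p k)%R)
  (hq : forall k, (0 <= q k)%R)
  (sp : (p 0%N + p 1%N + p 2%N = 1)%R) (sq : (q 0%N + q 1%N + q 2%N = 1)%R)
  (pq : forall k, q k = 0%R -> p k = 0%R).

Let P := wprob hp sp.
Let Q := wprob hq sq.

Lemma mnat (A : set nat) : measurable A.
Proof. by []. Qed.

Lemma PQ : P `<< Q.
Proof.
move=> N QN A _ AN; have := QN A (mnat A) AN.
rewrite /Q /P !wprobE => /eqP; rewrite eqe psumr_eq0; last first.
  by move=> k _; rewrite mulr_ge0 // indicE.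
move=> /allP H; apply/eqP; rewrite eqe; apply/eqP; apply: big1 => k _.
have := H k (mem_index_enum _); rewrite mulf_eq0 => /orP[/eqP /pq -> |/eqP ->];
  by rewrite ?mul0r ?mulr0.
Qed.

Lemma sum1 (F : nat -> R) (k : nat) : (k < 3)%N ->
  (\sum_(j < 3) F j * \1_[set k] j = F k)%R.
Proof.
move=> k3; rewrite (bigD1 (Ordinal k3)) //= big1 ?addr0.
  by rewrite indicE mem_set // mulr1.
move=> j /eqP jk; rewrite indicE memNset ?mulr0 //= => e; apply: jk.
by apply/val_inj.
Qed.

Lemma gk (k : nat) : (k < 3)%N -> (0 < q k)%R -> g P Q k = (p k / q k)%R.
Proof.
move=> k3 qk.
have e : P [set k] = ((g P Q k) * q k)%:E.
  rewrite (rn_int PQ _ (mnat _)).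
  rewrite (eq_integral (fun _ => (g P Q k)%:E)); last first.
    by move=> x /set_mem /= ->.
  rewrite (intA _ _ _ Q _ _ (mnat _)) /pr /Q wprobE /=.
  by rewrite sum1.
move: e; rewrite /P wprobE sum1 // => /eqP; rewrite eqe => /eqP ->.
by rewrite mulfK // gt_eqF.
Qed.

Lemma tvE : tv_norm P Q = (\sum_(k < 3) `|p k - q k|)%:E.
Proof.
rewrite /tv_norm (eq_integral (fun x => (`|g P Q x - 1|)%:E)); last first.
  by move=> x _; rewrite (fE PQ) -EFinB.
have -> : \int[Q]_x (`|g P Q x - 1|)%:E =
  \int[msum (fun k => mscale (NngNum (hq k)) (@dirac _ nat k R)) 3]_x (`|g P Q x - 1|)%:E by [].
rewrite ge0_integral_measure_sum // -sumEFin; apply: eq_bigr => k _.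
rewrite ge0_integral_mscale // integral_dirac // diracE in_setT mul1e /= -EFinM.
congr (_)%:E.
have [q0|q0] := eqVneq (q k) 0%R.
  by rewrite q0 (pq _ q0) mul0r subr0 normr0.
have qk : (0 < q k)%R by rewrite lt_neqAle eq_sym q0 hq.
rewrite gk // -{1}(ger0_norm (hq k)) -normrM mulrBr mulr1 mulrCA divff // mulr1.
reflexivity.
Qed.

Lemma FbarfE l : (0 < l)%R ->
  Fbar P Q l = (\sum_(k < 3) (if (l < p k / q k)%R then p k else 0))%:E.
Proof.
move=> l0; rewrite (FbarE PQ _ l0) /pr /P wprobE /=; congr (_)%:E.
apply: eq_bigr => k _.
have [q0|q0] := eqVneq (q k) 0%R.
  by rewrite (pq _ q0) mul0r if_same.
have qk : (0 < q k)%R by rewrite lt_neqAle eq_sym q0 hq.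
rewrite indicE; case: ifPn => h.
  have hk : (k : nat) \in [set x | (l < g P Q x)%R] by rewrite inE /= gk.
  by rewrite hk mulr1.
have hk : (k : nat) \notin [set x | (l < g P Q x)%R] by apply/negP; rewrite inE /= gk //; exact/negP.
by rewrite (negbTE hk) mulr0.
Qed.
End H.


Definition mk3 {R : realType} (a b c : R) : nat -> R :=
  fun k => if k == 0%N then a else if k == 1%N then b else if k == 2%N then c else 0%R.

Definition term {R : realType} (l p q : R) : R := if (l < p / q)%R then p else 0%R.

Lemma tight3 (R : realType) (a b c a' b' c' delta l : R) :
  (0 <= a)%R -> (0 <= b)%R -> (0 <= c)%R ->
  (0 <= a')%R -> (0 <= b')%R -> (0 <= c')%R ->
  (a + b + c = 1)%R -> (a' + b' + c' = 1)%R ->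
  (a' = 0 -> a = 0)%R -> (b' = 0 -> b = 0)%R -> (c' = 0 -> c = 0)%R ->
  (`|a - a'| + `|b - b'| + `|c - c'| = 2 * delta)%R -> (0 < l)%R ->
  exists (d : measure_display) (T : measurableType d) (P Q : probability T R),
    [/\ P `<< Q, tv_norm P Q = (2 * delta)%:E &
        Fbar P Q l = (term l a a' + term l b b' + term l c c')%:E].
Proof.
move=> ha hb hc ha' hb' hc' s s' za zb zc htv l0.
have hp : forall k, (0 <= mk3 a b c k)%R.
  by move=> [|[|[|k]]] //=.
have hq : forall k, (0 <= mk3 a' b' c' k)%R.
  by move=> [|[|[|k]]] //=.
have sp : (mk3 a b c 0 + mk3 a b c 1 + mk3 a b c 2 = 1)%R by [].
have sq : (mk3 a' b' c' 0 + mk3 a' b' c' 1 + mk3 a' b' c' 2 = 1)%R by [].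
have pq : forall k, mk3 a' b' c' k = 0%R -> mk3 a b c k = 0%R.
  by move=> [|[|[|k]]] //=.
have e1 := @FbarfE R _ _ hp hq sp sq pq l l0.
have e2 := @tvE R _ _ hp hq sp sq pq.
exists default_measure_display, nat, (wprob hp sp), (wprob hq sq); split.
- exact: PQ.
- rewrite e2 !big_ord_recl big_ord0 /= addr0 addrA htv //.
- rewrite e1 !big_ord_recl big_ord0 /= addr0 addrA //.
Qed.


Section T.
Context {R : realType}.
Implicit Types l p q : R.

Lemma term_ge0 l p q : (0 <= p)%R -> (0 <= term l p q)%R.
Proof. by rewrite /term; case: ifP. Qed.
Lemma term_le l p q : (0 <= p)%R -> (term l p q <= p)%R.
Proof. by rewrite /term; case: ifP. Qed.
Lemma term_hit l p q : (l < p / q)%R -> term l p q = p.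
Proof. by rewrite /term => ->. Qed.
Lemma term_miss l p q : (p / q <= l)%R -> term l p q = 0%R.
Proof. by rewrite /term ltNge => ->. Qed.
Lemma term_p0 l q : term l 0 q = 0%R.
Proof. by rewrite /term; case: ifP. Qed.

Lemma hit l p q : (0 < q)%R -> (l * q < p)%R -> term l p q = p.
Proof. by move=> q0 h; apply: term_hit; rewrite ltr_pdivlMr. Qed.
Lemma miss l p q : (0 <= l)%R -> (0 <= q)%R -> (p <= l * q)%R -> term l p q = 0%R.
Proof.
move=> l0 q0 h; apply: term_miss.
have [->|qn0] := eqVneq q 0%R; first by rewrite invr0 mulr0.
by rewrite ler_pdivrMr // lt_neqAle eq_sym qn0.
Qed.
Lemma normE (x y : R) : x = y -> (0 <= y)%R -> `|x|%R = y.
Proof. by move=> -> /ger0_norm. Qed.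
Lemma normEN (x y : R) : x = (- y)%R -> (0 <= y)%R -> `|x|%R = y.
Proof. by move=> -> /ger0_norm; rewrite normrN. Qed.
End T.

Lemma upper_tight (R : realType) (delta l eps : R) :
  (0 <= delta < 1)%R -> (0 < l)%R -> (0 < eps)%R ->
  exists (d : measure_display) (T : measurableType d) (P Q : probability T R),
    [/\ P `<< Q, tv_norm P Q = (2 * delta)%:E &
        (Fbar_upper delta l - eps)%:E < Fbar P Q l].
Proof.
move=> /andP[d0 d1] l0 e0.
have omd : (0 < 1 - delta)%R by lra.
rewrite /Fbar_upper; case: ifPn => h1.
- have l1 : (1 <= l * (1 - delta))%R by rewrite -ler_pdivrMr.
  have [dz|dpos] : delta = 0%R \/ (0 < delta)%R by lra.
  + have [dd [TT [PP [QQ [h2 h3 h4]]]]] := @tight3 R 1 0 0 1 0 0 delta l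
      ler01 (lexx 0) (lexx 0) ler01 (lexx 0) (lexx 0)
      ltac:(lra) ltac:(lra) ltac:(lra) ltac:(lra) ltac:(lra)
      ltac:(rewrite dz !subrr normr0; lra) l0.
    exists dd, TT, PP, QQ; split => //; rewrite h4 lte_fin dz mulr0 mul0r.
    have := @term_ge0 R l 1 1 ler01; rewrite !term_p0; lra.
  + have lg1 : (1 < l)%R by nra.
    set U := (l * delta / (l - 1))%R.
    have hU : (U * (l - 1) = l * delta)%R by rewrite /U mulfVK // subr_eq0 gt_eqF.
    have U1 : (U <= 1)%R by nra.
    have dU : (delta < U)%R by nra.
    set m := Num.min eps (U - delta)%R.
    have m0 : (0 < m)%R by rewrite lt_min e0 subr_gt0 dU.
    have me : (m <= eps)%R by rewrite ge_min lexx.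
    have mU : (m <= U - delta)%R by rewrite ge_min lexx orbT.
    set pa := (U - m / 2)%R.
    have epa : pa = (U - m / 2)%R by [].
    clearbody pa.
    have [dd [TT [PP [QQ [h2 h3 h4]]]]] := @tight3 R pa (1 - pa) 0 (pa - delta)
      (1 - pa + delta) 0 delta l
      ltac:(lra) ltac:(lra) (lexx 0) ltac:(lra) ltac:(lra) (lexx 0)
      ltac:(lra) ltac:(lra) ltac:(lra) ltac:(lra) ltac:(lra)
      ltac:(rewrite (@normE R (pa - (pa - delta)) delta) ?(@normEN R (1 - pa - (1 - pa + delta)) delta) ?(@normE R (0 - 0) 0) //;
            try ring; lra) l0.
    exists dd, TT, PP, QQ; split => //; rewrite h4 lte_fin.
    rewrite (@hit R l pa (pa - delta)); last 2 first.
    * lra.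
    * nra.
    rewrite !term_p0 addr0.
    have := @term_ge0 R l (1 - pa) (1 - pa + delta) ltac:(lra); lra.
- have [dd [TT [PP [QQ [h2 h3 h4]]]]] := @tight3 R 1 0 0 (1 - delta) delta 0
    delta l ler01 (lexx 0) (lexx 0) ltac:(lra) d0 (lexx 0)
    ltac:(lra) ltac:(lra) ltac:(lra) ltac:(lra) ltac:(lra)
    ltac:(rewrite (@normE R (1 - (1 - delta)) delta) ?(@normEN R (0 - delta) delta) ?(@normE R (0 - 0) 0) //;
          try ring; lra) l0.
  exists dd, TT, PP, QQ; split => //; rewrite h4 lte_fin.
  rewrite (@hit R l 1 (1 - delta)) //; last by rewrite -ltr_pdivlMr // ltNge.
  rewrite !term_p0; lra.
Qed.

Lemma lower_tight (R : realType) (delta l eps : R) :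
  (0 <= delta < 1)%R -> (0 < l)%R -> (0 < eps)%R ->
  exists (d : measure_display) (T : measurableType d) (P Q : probability T R),
    [/\ P `<< Q, tv_norm P Q = (2 * delta)%:E &
        Fbar P Q l < (Fbar_lower delta l + eps)%:E].
Proof.
move=> /andP[d0 d1] l0 e0.
have omd : (0 < 1 - delta)%R by lra.
rewrite /Fbar_lower; case: ifPn => h1.
  have [dd [TT [PP [QQ [h2 h3 h4]]]]] := @tight3 R 1 0 0 (1 - delta) delta 0
    delta l ler01 (lexx 0) (lexx 0) ltac:(lra) d0 (lexx 0)
    ltac:(lra) ltac:(lra) ltac:(lra) ltac:(lra) ltac:(lra)
    ltac:(rewrite (@normE R (1 - (1 - delta)) delta) ?(@normEN R (0 - delta) delta) ?(@normE R (0 - 0) 0) //;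
          try ring; lra) l0.
  exists dd, TT, PP, QQ; split => //; rewrite h4 lte_fin.
  rewrite (@miss R l 1 (1 - delta)) ?(ltW l0) ?(ltW omd) //; last first.
    by rewrite -ler_pdivrMr // ltW.
  rewrite !term_p0; lra.
have h1' : (l * (1 - delta) <= 1)%R by rewrite -ler_pdivlMr // leNgt.
case: ifPn => h2.
  set s := Num.min (1 - delta)%R (eps / (2 * l))%R.
  have s0 : (0 < s)%R by rewrite lt_min omd divr_gt0 // mulr_gt0.
  have s1 : (s <= 1 - delta)%R by rewrite ge_min lexx.
  have s2 : (l * s <= eps / 2)%R.
    have : (s <= eps / (2 * l))%R by rewrite ge_min lexx orbT.
    rewrite ler_pdivlMr ?mulr_gt0 // => h.
    rewrite ler_pdivlMr //; nra.
  have es : s = s by [].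
  clearbody s.
  set qa := (1 - delta - s)%R.
  have eqa : qa = (1 - delta - s)%R by [].
  clearbody qa.
  have [dd [TT [PP [QQ [h3 h4 h5]]]]] := @tight3 R (l * qa) 0 (1 - l * qa) qa delta s
    delta l ltac:(nra) (lexx 0) ltac:(nra) ltac:(lra) d0 ltac:(lra)
    ltac:(lra) ltac:(lra) ltac:(move=> ->; rewrite mulr0 //) ltac:(lra) ltac:(lra)
    ltac:(rewrite (@normE R (l * qa - qa) ((l - 1) * qa)) ?(@normEN R (0 - delta) delta) ?(@normE R (1 - l * qa - s) (1 - l * qa - s)) //;
          try ring; nra) l0.
  exists dd, TT, PP, QQ; split => //; rewrite h5 lte_fin.
  rewrite (@miss R l (l * qa) qa) ?(ltW l0) //; last by lra.
  rewrite term_p0.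
  have := @term_le R l (1 - l * qa) s ltac:(nra); nra.
case: ifPn => h3.
  have lle1 : (l <= 1)%R by rewrite leNgt.
  have lge : (1 - delta <= l)%R.
    by move: h3 => /orP[/ltW //|/eqP ->]; lra.
  set s := Num.min (eps / 2)%R ((1 - delta) / 2)%R.
  have s0 : (0 < s)%R by rewrite lt_min !divr_gt0 // e0.
  have s1 : (s <= (1 - delta) / 2)%R by rewrite ge_min lexx orbT.
  have s2 : (s <= eps / 2)%R by rewrite ge_min lexx.
  clearbody s.
  have [dd [TT [PP [QQ [h4 h5 h6]]]]] := @tight3 R (s + delta) (1 - s - delta) 0 s (1 - s) 0
    delta l ltac:(lra) ltac:(lra) (lexx 0) ltac:(lra) ltac:(lra) (lexx 0)
    ltac:(lra) ltac:(lra) ltac:(lra) ltac:(lra) ltac:(lra)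
    ltac:(rewrite (@normE R (s + delta - s) delta) ?(@normEN R (1 - s - delta - (1 - s)) delta) ?(@normE R (0 - 0) 0) //;
          try ring; lra) l0.
  exists dd, TT, PP, QQ; split => //; rewrite h6 lte_fin.
  rewrite (@miss R l (1 - s - delta) (1 - s)) ?(ltW l0) //; last 2 first.
  - lra.
  - nra.
  rewrite term_p0.
  have := @term_le R l (s + delta) s ltac:(lra); lra.
move: h3; rewrite negb_or => /andP[h3 h4]; rewrite -leNgt in h3.
have l1 : (l < 1)%R by rewrite lt_neqAle h4 /=; lra.
have [dz|dpos] : delta = 0%R \/ (0 < delta)%R by lra.
  have [dd [TT [PP [QQ [h5 h6 h7]]]]] := @tight3 R 1 0 0 1 0 0 delta l
    ler01 (lexx 0) (lexx 0) ler01 (lexx 0) (lexx 0)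
    ltac:(lra) ltac:(lra) ltac:(lra) ltac:(lra) ltac:(lra)
    ltac:(rewrite dz !subrr normr0; lra) l0.
  exists dd, TT, PP, QQ; split => //; rewrite h7 lte_fin dz mulr0 mul0r !term_p0.
  have := @term_le R l 1 1 ler01; lra.
set V := (delta / (1 - l))%R.
have hV : (V * (1 - l) = delta)%R by rewrite /V mulfVK // subr_eq0 gt_eqF.
have eL : (l * delta / (1 - l) = l * V)%R by rewrite /V mulrA.
rewrite eL.
clearbody V.
have V0 : (0 < V)%R by nra.
have V1 : (V <= 1)%R by nra.
set t := Num.min (eps / 2)%R (l * V)%R.
have t0 : (0 < t)%R by rewrite lt_min divr_gt0 // mulr_gt0.
have t1 : (t <= l * V)%R by rewrite ge_min lexx orbT.
have t2 : (t <= eps / 2)%R by rewrite ge_min lexx.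
clearbody t.
have [dd [TT [PP [QQ [h5 h6 h7]]]]] := @tight3 R (1 - V + t + delta) (V - t - delta) 0
  (1 - V + t) (V - t) 0 delta l
  ltac:(lra) ltac:(nra) (lexx 0) ltac:(lra) ltac:(nra) (lexx 0)
  ltac:(lra) ltac:(lra) ltac:(lra) ltac:(nra) ltac:(lra)
  ltac:(rewrite (@normE R (1 - V + t + delta - (1 - V + t)) delta) ?(@normEN R (V - t - delta - (V - t)) delta) ?(@normE R (0 - 0) 0) //;
        try ring; lra) l0.
exists dd, TT, PP, QQ; split => //; rewrite h7 lte_fin.
rewrite (@miss R l (V - t - delta) (V - t)) ?(ltW l0) //; last 2 first.
- nra.
- nra.
rewrite term_p0.
have := @term_le R l (1 - V + t + delta) (1 - V + t) ltac:(lra); nra.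
Qed.


Theorem mainTheorem2 (R : realType) :
  (forall (d : measure_display) (T : measurableType d)
          (P Q : probability T R) (delta lambda : R),
      P `<< Q ->
      tv_norm P Q = (2 * delta)%:E ->
      (0 < lambda)%R ->
      (Fbar_lower delta lambda)%:E <= Fbar P Q lambda
      /\ Fbar P Q lambda <= (Fbar_upper delta lambda)%:E)
  /\
  (forall (delta lambda eps : R),
      (0 <= delta < 1)%R -> (0 < lambda)%R -> (0 < eps)%R ->
      (exists (d : measure_display) (T : measurableType d)
              (P Q : probability T R),
          [/\ P `<< Q, tv_norm P Q = (2 * delta)%:E &
              (Fbar_upper delta lambda - eps)%:E < Fbar P Q lambda])
      /\
      (exists (d : measure_display) (T : measurableType d)
              (P Q : probability T R),
          [/\ P `<< Q, tv_norm P Q = (2 * delta)%:E &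
              Fbar P Q lambda < (Fbar_lower delta lambda + eps)%:E])).
Proof.
split.
  move=> d T P Q delta l PQ htv l0; exact: bounds PQ delta l htv l0.
move=> delta l eps hd l0 e0; split.
  exact: upper_tight.
exact: lower_tight.
Qed.
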